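(* For all integers $m\geq 2$ and every $\lambda>-\frac12$, $$\frac{(m-1)m^2(m+1)(m+\lambda)^2(m+\lambda+1)^2}{2(2\lambda+1)(2\lambda+5)}\leq A_{2,m}\leq\frac{(m-1)m(m+1)^2(m+\lambda)^2(m+\lambda+1)(m+\lambda+2)}{2(2\lambda+1)(2\lambda+5)}.$$
   Context: Fix $\lambda>-1/2$. Define polynomials $Q_m$ by $Q_0=1$, $Q_1(\mu)=1-\frac{2(\lambda+1)(\lambda+2)}{2\lambda+1}\mu$ and, for $m\geq2$, $$Q_m-Q_{m-1}=\frac{m(2m-1)(2m+\lambda)}{(m-1+\lambda)(2m-2+\lambda)(2m-1+2\lambda)}\big[Q_{m-1}-Q_{m-2}\big]-\frac{2m(2m-1+\lambda)(2m+\lambda)}{2m-1+2\lambda}\,\mu\,Q_{m-1}(\mu).$$ Write $Q_m(\mu)=\sum_{i=0}^m(-1)^iA_{i,m}\mu^i$; thus $A_{2,m}$ is the coefficient of $\mu^2$ in $Q_m$. *)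

(* Defs.v *)
From mathcomp Require Import all_boot all_order all_algebra.
Set Implicit Arguments. Unset Strict Implicit. Unset Printing Implicit Defensive.
Import Order.TTheory GRing.Theory Num.Theory.
Local Open Scope ring_scope.

Section Q.
Variable R : realFieldType.
Variable lam : R.

Definition Qr (m : nat) : R :=
  (m%:R * (2 * m%:R - 1) * (2 * m%:R + lam)) /
  ((m%:R - 1 + lam) * (2 * m%:R - 2 + lam) * (2 * m%:R - 1 + 2 * lam)).

Definition Qs (m : nat) : R :=
  (2 * m%:R * (2 * m%:R - 1 + lam) * (2 * m%:R + lam)) /
  (2 * m%:R - 1 + 2 * lam).

Definition Q1 : {poly R} :=
  1 - (2 * (lam + 1) * (lam + 2) / (2 * lam + 1)) *: 'X.

(* Qaux n = (Q_n, Q_{n+1}) *)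
Fixpoint Qaux (n : nat) : {poly R} * {poly R} :=
  match n with
  | 0 => (1, Q1)
  | n'.+1 =>
      let: (a, b) := Qaux n' in
      (* a = Q_{m-2}, b = Q_{m-1}, with m = n'.+2 *)
      (b, b + Qr n'.+2 *: (b - a) - Qs n'.+2 *: ('X * b))
  end.

Definition Q (m : nat) : {poly R} := (Qaux m).1.

(* Q_m(mu) = \sum_i (-1)^i A_{i,m} mu^i *)
Definition A (i m : nat) : R := (-1) ^+ i * (Q m)`_i.
End Q.

(* Main.v *)
Require Import Defs.
From mathcomp Require Import all_boot all_order all_algebra.
From mathcomp Require Import ring lra.
Import Order.TTheory GRing.Theory Num.Theory.
Local Open Scope ring_scope.

Section Proofs.
Variable R : realFieldType.
Variable lam : R.
Hypothesis hlam : -1 / 2 < lam.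

Lemma Qaux_eq n : Qaux lam n = (Q lam n, Q lam n.+1).
Proof.
elim: n => [|n IH] //=.
rewrite /Q /=. by case: (Qaux lam n).
Qed.

Lemma Qrec n : Q lam n.+2 = Q lam n.+1 + Qr lam n.+2 *: (Q lam n.+1 - Q lam n)
   - Qs lam n.+2 *: ('X * Q lam n.+1).
Proof. by rewrite {1}/Q /= Qaux_eq. Qed.

Definition f1 (x : R) := x * (x + 1) * (x + lam) * (x + lam + 1) / (2 * lam + 1).
Definition CC (x : R) := 3 * (2 * lam + 3) * x ^+ 3 + 3 * (2 * lam + 3) ^+ 2 * x ^+ 2
  + (6 * lam ^+ 3 + 31 * lam ^+ 2 + 41 * lam + 4) * x
  + (4 * lam ^+ 3 + 10 * lam ^+ 2 - 10 * lam - 28).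
Definition f2 (x : R) := (x - 1) * x * (x + 1) * (x + lam) * (x + lam + 1) * CC x
  / (6 * (2 * lam + 1) * (2 * lam + 3) * (2 * lam + 5)).

Definition P n := [/\ (Q lam n)`_0 = 1, (Q lam n)`_1 = - f1 n%:R & (Q lam n)`_2 = f2 n%:R].

Lemma l1 : 2 * lam + 1 != 0. Proof. apply/lt0r_neq0. move: hlam => h. lra. Qed.
Lemma l3 : 2 * lam + 3 != 0. Proof. apply/lt0r_neq0; move: hlam => h; lra. Qed.
Lemma l5 : 2 * lam + 5 != 0. Proof. apply/lt0r_neq0; move: hlam => h; lra. Qed.

Lemma PQ n : P n /\ P n.+1.
Proof.
have h1 := l1; have h3 := l3; have h5 := l5; have hl := hlam.
elim: n => [|n [[a0 a1 a2] [b0 b1 b2]]].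
{ split; rewrite /P /Q /= ?coef1 /f1 /f2 /Q1 ?coefB ?coef1 ?coefZ ?coefX /=;
   split; rewrite ?mulr0n ?mulr1n.
  all: try by [].
  all: field; by rewrite ?h1 ?h3 ?h5. }
split => //.
have hx : 0 <= n%:R :> R by rewrite ler0n.
have e2 : (n.+2)%:R = n%:R + 2 :> R by rewrite -addn2 natrD.
have d1 : n%:R + 2 - 1 + lam != 0 by apply/lt0r_neq0; lra.
have d2 : 2 * (n%:R + 2) - 2 + lam != 0 by apply/lt0r_neq0; lra.
have d3 : 2 * (n%:R + 2) - 1 + 2 * lam != 0 by apply/lt0r_neq0; lra.
have e1 : (n.+1)%:R = n%:R + 1 :> R by rewrite -addn1 natrD.
rewrite /P Qrec !coefE /= a0 a1 a2 b0 b1 b2 /Qr /Qs e2 e1 /f1 /f2 /CC.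
split.
- by rewrite subrr !mulr0 addr0 subr0.
- field. by rewrite d1 d2 d3 h1.
- field. by rewrite d1 d2 d3 h1 h3 h5.
Qed.

End Proofs.

Theorem lemma3p5 (R : realFieldType) (lam : R) (m : nat) :
  -1 / 2 < lam -> (2 <= m)%N ->
  let M : R := m%:R in
  (M - 1) * M ^+ 2 * (M + 1) * (M + lam) ^+ 2 * (M + lam + 1) ^+ 2
    / (2 * (2 * lam + 1) * (2 * lam + 5)) <= A lam 2 m /\
  A lam 2 m <=
  (M - 1) * M * (M + 1) ^+ 2 * (M + lam) ^+ 2 * (M + lam + 1) * (M + lam + 2)
    / (2 * (2 * lam + 1) * (2 * lam + 5)).
Proof.
move=> hl hm M.
have [[_ _ c2] _] := @PQ R lam hl m.
have hx : 2 <= M by rewrite /M (ler_nat R 2 m).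
have d1 := @l1 R lam hl; have d3 := @l3 R lam hl; have d5 := @l5 R lam hl.
have p1 : 0 < 2 * lam + 1 by lra.
have p3 : 0 < 2 * lam + 3 by lra.
have p5 : 0 < 2 * lam + 5 by lra.
have hD : 0 < 6 * (2 * lam + 1) * (2 * lam + 3) * (2 * lam + 5).
  by rewrite !mulr_gt0 //.
have hP : 0 <= (M - 1) * M * (M + 1) * (M + lam) * (M + lam + 1).
  rewrite !mulr_ge0 //; lra.
rewrite /A c2 -/M.
have -> : (-1) ^+ 2 = 1 :> R by rewrite expr2 mulrNN mulr1.
rewrite mul1r; split; rewrite -subr_ge0.
- have -> : f2 R lam M -
   (M - 1) * M ^+ 2 * (M + 1) * (M + lam) ^+ 2 * (M + lam + 1) ^+ 2 /
   (2 * (2 * lam + 1) * (2 * lam + 5)) =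
   (M - 1) * M * (M + 1) * (M + lam) * (M + lam + 1) *
   (6 * (2 * lam + 3) * M ^+ 2 + (16 * lam ^+ 2 + 32 * lam + 4) * M
     + (4 * lam ^+ 3 + 10 * lam ^+ 2 - 10 * lam - 28))
   / (6 * (2 * lam + 1) * (2 * lam + 3) * (2 * lam + 5)).
    rewrite /f2 /CC; field; by rewrite d1 d3 d5.
  apply: divr_ge0; last exact: ltW.
  apply: mulr_ge0 => //.
  set t := lam + 1 / 2; set k := M - 2.
  have ht : 0 < t by rewrite /t; lra.
  have hk : 0 <= k by rewrite /k; lra.
  have -> : 6 * (2 * lam + 3) * M ^+ 2 + (16 * lam ^+ 2 + 32 * lam + 4) * M
     + (4 * lam ^+ 3 + 10 * lam ^+ 2 - 10 * lam - 28) =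
     4 * t ^+ 3 + 36 * t ^+ 2 + 63 * t + 11 + k * (16 * t ^+ 2 + 64 * t + 40)
     + k ^+ 2 * (12 * t + 12) by rewrite /t /k; field.
  have q1 : 0 <= t ^+ 3 by rewrite exprn_ge0 // ltW.
  have q2 : 0 <= t ^+ 2 by rewrite exprn_ge0 // ltW.
  have q3 : 0 <= k * (16 * t ^+ 2 + 64 * t + 40) by rewrite mulr_ge0 //; lra.
  have q4 : 0 <= k ^+ 2 * (12 * t + 12) by rewrite mulr_ge0 ?exprn_ge0 //; lra.
  lra.
- have -> : (M - 1) * M * (M + 1) ^+ 2 * (M + lam) ^+ 2 * (M + lam + 1) * (M + lam + 2)
     / (2 * (2 * lam + 1) * (2 * lam + 5)) - f2 R lam M =
   (M - 1) * M * (M + 1) * (M + lam) * (M + lam + 1) *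
   ((2 * lam ^+ 2 + 7 * lam + 14) * M + (2 * lam ^+ 3 + 11 * lam ^+ 2 + 28 * lam + 28))
   / (6 * (2 * lam + 1) * (2 * lam + 3) * (2 * lam + 5)).
    rewrite /f2 /CC; field; by rewrite d1 d3 d5.
  apply: divr_ge0; last exact: ltW.
  apply: mulr_ge0 => //.
  set t := lam + 1 / 2.
  have ht : 0 < t by rewrite /t; lra.
  have hM : 0 <= M by lra.
  have -> : lam = t - 1 / 2 by rewrite /t; field.
  nra.
Qed.
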